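(* In the setting described in the context, let $\phi,\phi_0\in\Gamma$ be, respectively, a quasi-lower solution and a quasi-upper solution of the wave equation $(W)$, with $\phi(t)\le\phi_0(t)$ for all $t\in\mathbb{R}$. Let $\phi_1:=G(H(\phi_0))$. Then (i) $\phi_1\in\Gamma$; and (ii) $\phi_1$ is an upper solution of $(W)$ and $\phi(t)\le\phi_1(t)\le\phi_0(t)$ for all $t\in\mathbb{R}$.
   Context: Fix $n\ge1$, $\tau\ge0$, a wave speed $c>0$, $D=\mathrm{diag}(d_1,\dots,d_n)$ with all $d_i>0$, and $\mathbf K=(K_1,\dots,K_n)^T$ with all $K_i>0$. Vectors in $\mathbb{R}^n$ are ordered componentwise: $x\le y$ iff $x_i\le y_i$ for all $i$; $[\mathbf 0,\mathbf K]=\{v:\mathbf 0\le v\le\mathbf K\}$. Let $f:C([-\tau,0],\mathbb{R}^n)\to\mathbb{R}^n$ be continuous with $f(\hat 0)=f(\hat K)=0$ and $f(\hat u)\neq0$ for every $u\in[\mathbf 0,\mathbf K]\setminus\{\mathbf 0,\mathbf K\}$, where $\hat u$ denotes the constant function with value $u$. Let $X_c=C([-c\tau,0],\mathbb{R}^n)$ and $f_c:X_c\to\mathbb{R}^n$, $f_c(\psi)=f(\psi^c)$ with $\psi^c(\theta)=\psi(c\theta)$, $\theta\in[-\tau,0]$. For $\phi\in C(\mathbb{R},\mathbb{R}^n)$ and $t\in\mathbb{R}$, $\phi_t\in X_c$ is $\phi_t(s)=\phi(t+s)$. The wave equation is $$D\phi''(t)-c\phi'(t)+f_c(\phi_t)=\mathbf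 0,\quad t\in\mathbb{R}.\tag{W}$$ Assume there is $\beta=\mathrm{diag}(\beta_1,\dots,\beta_n)$ with all $\beta_i>0$ such that $f_c(\phi)-f_c(\psi)+\beta[\phi(0)-\psi(0)]\ge\mathbf 0$ whenever $\phi,\psi\in X_c$ with $\mathbf 0\le\psi(\theta)\le\phi(\theta)\le\mathbf K$ for all $\theta$. Define $H(\phi)(t)=f_c(\phi_t)+\beta\phi(t)$. Let $\Gamma$ be the set of nondecreasing $\varphi\in C(\mathbb{R},\mathbb{R}^n)$ with $\lim_{t\to-\infty}\varphi(t)=\mathbf 0$ and $\lim_{t\to+\infty}\varphi(t)=\mathbf K$. For $i=1,\dots,n$ let $\lambda_{1i}=\frac{c-\sqrt{c^2+4\beta_id_i}}{2d_i}<0<\lambda_{2i}=\frac{c+\sqrt{c^2+4\beta_id_i}}{2d_i}$. For bounded $h:\mathbb{R}\to\mathbb{R}^n$, $G(h)$ is the unique bounded $C^1$ solution of $Dx''-cx'-\beta x+h=\mathbf 0$, given componentwise by $G_i(h)(t)=\frac{1}{d_i(\lambda_{2i}-\lambda_{1i})}\big(\int_{-\infty}^te^{\lambda_{1i}(t-s)}h_i(s)ds+\int_t^\infty e^{\lambda_{2i}(t-s)}h_i(s)ds\big)$. An upper solution of (W) is $\rho\in C^2(\mathbb{R},\mathbb{R}^n)$ with $\rho,\rho',\rho''$ bounded and $D\rho''(t)-c\rho'(t)+f_c(\rho_t)\le\mathbf 0$ for all $t$. A quasi-upper solution of (W) is $\rho\in C^1(\mathbb{R},\mathbb{R}^n)$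 with $\rho,\rho'$ bounded on $\mathbb{R}$, $\rho''$ existing, continuous and bounded on $\mathbb{R}\setminus\{0\}$ with one-sided limits at $0$, and $D\rho''(t)-c\rho'(t)+f_c(\rho_t)\le\mathbf 0$ for all $t\ne0$. Quasi-lower solutions are defined the same way with the inequality reversed ($\ge\mathbf 0$). *)

(* Defs.v *)
From Stdlib Require Import Reals.
From Coquelicot Require Import Coquelicot.
From mathcomp Require Import fintype.
Open Scope R_scope.

Definition vec (n : nat) := 'I_n -> R.
Definition vle {n} (x y : vec n) : Prop := forall i, x i <= y i.
Definition vzero {n} : vec n := fun _ => 0.

(* a function R -> R^n, used for elements of C([a,b],R^n) (only the values on
   [a,b] matter) and for profiles phi : R -> R^n *)
Definition vfun (n : nat) := R -> vec n.

Definition cont_on {n} (a b : R) (g : vfun n) : Prop :=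
  forall x, a <= x <= b -> forall eps, 0 < eps -> exists delta, 0 < delta /\
    forall y, a <= y <= b -> Rabs (y - x) < delta ->
      forall i, Rabs (g y i - g x i) < eps.

(* f : C([-tau,0],R^n) -> R^n is represented by a map on vfun that only
   depends on the values on [-tau,0] and is continuous for the sup norm *)
Definition f_local {n} (tau : R) (f : vfun n -> vec n) : Prop :=
  forall phi psi : vfun n, (forall th, -tau <= th <= 0 -> phi th = psi th) ->
    f phi = f psi.

Definition f_continuous {n} (tau : R) (f : vfun n -> vec n) : Prop :=
  forall phi, cont_on (-tau) 0 phi -> forall eps, 0 < eps -> exists delta, 0 < delta /\
    forall psi, cont_on (-tau) 0 psi ->
      (forall th, -tau <= th <= 0 -> forall i, Rabs (psi th i - phi th i) < delta) ->
      forall i, Rabs (f psi i - f phi i) < eps.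

Definition hat {n} (u : vec n) : vfun n := fun _ => u.

Definition f_c {n} (c : R) (f : vfun n -> vec n) (psi : vfun n) : vec n :=
  f (fun th => psi (c * th)).

Definition shift {n} (phi : vfun n) (t : R) : vfun n := fun s => phi (t + s).

Definition Hop {n} (c : R) (f : vfun n -> vec n) (beta : vec n) (phi : vfun n) : vfun n :=
  fun t i => f_c c f (shift phi t) i + beta i * phi t i.

Definition lam1 (c d b : R) : R := (c - sqrt (c ^ 2 + 4 * b * d)) / (2 * d).
Definition lam2 (c d b : R) : R := (c + sqrt (c ^ 2 + 4 * b * d)) / (2 * d).

Definition Gop {n} (c : R) (d beta : vec n) (h : vfun n) : vfun n :=
  fun t i =>
    let l1 := lam1 c (d i) (beta i) in
    let l2 := lam2 c (d i) (beta i) in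
    / (d i * (l2 - l1)) *
    (RInt_gen (fun s => exp (l1 * (t - s)) * h s i) (Rbar_locally m_infty) (at_point t)
     + RInt_gen (fun s => exp (l2 * (t - s)) * h s i) (at_point t) (Rbar_locally p_infty)).

Definition bounded {n} (g : vfun n) : Prop :=
  exists M, forall t i, Rabs (g t i) <= M.

Definition bounded_off0 {n} (g : vfun n) : Prop :=
  exists M, forall t i, t <> 0 -> Rabs (g t i) <= M.

Definition in_Gamma {n} (K : vec n) (phi : vfun n) : Prop :=
  (forall t i, continuous (fun s => phi s i) t) /\
  (forall t s i, t <= s -> phi t i <= phi s i) /\
  (forall i, is_lim (fun s => phi s i) m_infty 0) /\
  (forall i, is_lim (fun s => phi s i) p_infty (K i)).

(* wave operator D rho'' - c rho' + f_c(rho_t), given rho' = r1, rho'' = r2 *)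
Definition wave {n} (c : R) (D : vec n) (f : vfun n -> vec n)
  (rho r1 r2 : vfun n) (t : R) (i : 'I_n) : R :=
  D i * r2 t i - c * r1 t i + f_c c f (shift rho t) i.

Definition upper_solution {n} (c : R) (D : vec n) (f : vfun n -> vec n) (rho : vfun n) : Prop :=
  exists r1 r2 : vfun n,
    (forall t i, is_derive (fun s => rho s i) t (r1 t i)) /\
    (forall t i, is_derive (fun s => r1 s i) t (r2 t i)) /\
    (forall t i, continuous (fun s => r2 s i) t) /\
    bounded rho /\ bounded r1 /\ bounded r2 /\
    (forall t i, wave c D f rho r1 r2 t i <= 0).

Definition quasi_regular {n} (rho r1 r2 : vfun n) : Prop :=
    (forall t i, is_derive (fun s => rho s i) t (r1 t i)) /\
    (forall t i, continuous (fun s => r1 s i) t) /\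
    bounded rho /\ bounded r1 /\
    (forall t i, t <> 0 -> is_derive (fun s => r1 s i) t (r2 t i)) /\
    (forall t i, t <> 0 -> continuous (fun s => r2 s i) t) /\
    bounded_off0 r2 /\
    (forall i, exists l, filterlim (fun s => r2 s i) (at_left 0) (locally l)) /\
    (forall i, exists l, filterlim (fun s => r2 s i) (at_right 0) (locally l)).

Definition quasi_upper {n} (c : R) (D : vec n) (f : vfun n -> vec n) (rho : vfun n) : Prop :=
  exists r1 r2 : vfun n, quasi_regular rho r1 r2 /\
    (forall t i, t <> 0 -> wave c D f rho r1 r2 t i <= 0).

Definition quasi_lower {n} (c : R) (D : vec n) (f : vfun n -> vec n) (rho : vfun n) : Prop :=
  exists r1 r2 : vfun n, quasi_regular rho r1 r2 /\
    (forall t i, t <> 0 -> wave c D f rho r1 r2 t i >= 0).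

(* Main.v *)
Require Import Defs.
From Stdlib Require Import Reals Lra Psatz.
From Coquelicot Require Import Coquelicot.
From mathcomp Require Import fintype.
Open Scope R_scope.

Module FinB.
Import ssreflect ssrbool eqtype seq.
Lemma in_In (T : eqType) (x : T) (l : seq T) : x \in l -> List.In x l.
Proof.
  elim: l => [|y l IH]; first by rewrite in_nil.
  rewrite in_cons => /orP [/eqP ->|H]; [left; reflexivity|right; auto].
Qed.
Lemma fin_bound (n : nat) (B : 'I_n -> R) : exists M, forall i, B i <= M.
Proof.
  assert (H : forall l : list 'I_n, exists M, forall i, List.In i l -> B i <= M).
  { induction l as [|x l IH].
    - exists 0. intros i [].
    - destruct IH as [M HM]. exists (Rmax (B x) M). intros i [<-|Hi].
      + apply Rmax_l.
      + eapply Rle_trans; [apply HM; exact Hi| apply Rmax_r]. }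
  destruct (H (ord_enum n)) as [M HM]. exists M. intros i. apply HM.
  apply in_In. apply mem_ord_enum.
Qed.
End FinB.

Lemma cont_of_eps (f : R -> R) x :
  (forall eps, 0 < eps -> exists delta, 0 < delta /\
     forall y, Rabs (y - x) < delta -> Rabs (f y - f x) < eps) -> continuous f x.
Proof.
  intros H. apply continuity_pt_filterlim.
  unfold continuity_pt, continue_in, limit1_in, limit_in. intros eps He.
  destruct (H eps He) as [d [Hd H']]. exists d; split; auto.
  intros y [_ Hy]. simpl in *. unfold R_dist in *. apply H'. exact Hy.
Qed.

Lemma eps_of_cont (f : R -> R) x : continuous f x ->
  forall eps, 0 < eps -> exists delta, 0 < delta /\
     forall y, Rabs (y - x) < delta -> Rabs (f y - f x) < eps.
Proof.
  intros H. apply continuity_pt_filterlim in H.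
  unfold continuity_pt, continue_in, limit1_in, limit_in in H. intros eps He.
  destruct (H eps He) as [d [Hd H']]. exists d; split; auto.
  intros y Hy. destruct (Req_dec y x) as [->|Hne].
  - rewrite Rminus_diag, Rabs_R0; auto.
  - apply (H' y). split. unfold D_x, no_cond. split; auto. simpl. unfold R_dist. exact Hy.
Qed.

Lemma is_derive_eq (f : R -> R) (x l l' : R) : is_derive f x l -> l = l' -> is_derive f x l'.
Proof. intros H ->; exact H. Qed.

Lemma der_mult (f g : R -> R) x df dg : is_derive f x df -> is_derive g x dg ->
  is_derive (fun t => f t * g t) x (df * g x + f x * dg).
Proof. intros H1 H2. exact (is_derive_mult f g x df dg H1 H2 Rmult_comm). Qed.

Lemma der_plus (f g : R -> R) x df dg : is_derive f x df -> is_derive g x dg ->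
  is_derive (fun t => f t + g t) x (df + dg).
Proof. intros H1 H2. exact (is_derive_plus f g x df dg H1 H2). Qed.

Lemma der_minus (f g : R -> R) x df dg : is_derive f x df -> is_derive g x dg ->
  is_derive (fun t => f t - g t) x (df - dg).
Proof. intros H1 H2. exact (is_derive_minus f g x df dg H1 H2). Qed.

Lemma der_scal (f : R -> R) k x df : is_derive f x df ->
  is_derive (fun t => k * f t) x (k * df).
Proof. intros H1. exact (is_derive_scal f x k df H1). Qed.

Lemma der_expl a x : is_derive (fun t => exp (a * t)) x (a * exp (a * x)).
Proof. auto_derive; [auto | ring]. Qed.

Lemma der_shift (f : R -> R) s x df : is_derive f (x + s) df ->
  is_derive (fun t => f (t + s)) x df.
Proof.
  intros H. eapply is_derive_eq. apply (is_derive_comp f (fun t => t + s)). exact H.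
  auto_derive; auto. simpl. unfold scal; simpl; unfold mult; simpl; ring.
Qed.

Lemma der_cont (f : R -> R) x l : is_derive f x l -> continuous f x.
Proof. intros H. apply (@ex_derive_continuous R_AbsRing R_NormedModule). exists l; exact H. Qed.

Lemma lip_of_deriv (g g' : R -> R) M : (forall t, is_derive g t (g' t)) ->
  (forall t, Rabs (g' t) <= M) -> forall x y, Rabs (g x - g y) <= M * Rabs (x - y).
Proof.
  intros Hd Hb x y.
  destruct (MVT_gen g y x g') as [c0 [_ Hc]].
  - intros; apply Hd.
  - intros; apply continuity_pt_filterlim. eapply der_cont; apply Hd.
  - rewrite Hc, Rabs_mult. apply Rmult_le_compat_r; [apply Rabs_pos | apply Hb].
Qed.


Lemma cont_mult (f g : R -> R) x : continuous f x -> continuous g x -> continuous (fun t => f t * g t) x.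
Proof. intros; apply (continuous_mult f g x); auto. Qed.
Lemma cont_plus (f g : R -> R) x : continuous f x -> continuous g x -> continuous (fun t => f t + g t) x.
Proof. intros; apply (@continuous_plus R_UniformSpace R_AbsRing R_NormedModule f g x); auto. Qed.
Lemma cont_minus (f g : R -> R) x : continuous f x -> continuous g x -> continuous (fun t => f t - g t) x.
Proof. intros; apply (@continuous_minus R_UniformSpace R_AbsRing R_NormedModule f g x); auto. Qed.
Lemma cont_const (k x : R) : continuous (fun _ : R => k) x.
Proof. apply continuous_const. Qed.
Lemma cont_scal (k : R) (f : R -> R) x : continuous f x -> continuous (fun t => k * f t) x.
Proof. intros; apply cont_mult; auto; apply cont_const. Qed.

Lemma noninc (E dE : R -> R) : (forall t, continuous E t) ->
  (forall t, t <> 0 -> is_derive E t (dE t)) -> (forall t, t <> 0 -> dE t <= 0) ->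
  forall x y, x <= y -> E y <= E x.
Proof.
  intros Hc Hd Hn.
  assert (aux : forall x y, x <= y -> (forall t, x < t < y -> t <> 0) -> E y <= E x).
  { intros x y Hxy Hz.
    set (df := fun t => if Req_EM_T t 0 then 0 else dE t).
    destruct (MVT_gen E x y df) as [c0 [_ Hc0]].
    - intros t Ht. rewrite Rmin_left in Ht by lra. rewrite Rmax_right in Ht by lra.
      unfold df. destruct (Req_EM_T t 0) as [e|ne]. { exfalso; apply (Hz t Ht e). }
      apply Hd; auto.
    - intros; apply continuity_pt_filterlim; apply Hc.
    - assert (df c0 <= 0). { unfold df. destruct (Req_EM_T c0 0). lra. auto. }
      nra. }
  intros x y Hxy.
  destruct (Rlt_dec x 0) as [Hx|Hx]; destruct (Rlt_dec 0 y) as [Hy|Hy].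
  - apply Rle_trans with (E 0).
    + apply aux; [lra|]. intros t Ht; lra.
    + apply aux; [lra|]. intros t Ht; lra.
  - apply aux; auto. intros t Ht; lra.
  - apply aux; auto. intros t Ht; lra.
  - apply aux; auto. intros t Ht; lra.
Qed.

Lemma exp_small a eps t : 0 < a -> 0 < eps -> exists s, s <= t /\ exp (a * s) < eps.
Proof.
  intros Ha He. exists (Rmin t ((ln eps - 1) / a)). split. apply Rmin_l.
  apply Rle_lt_trans with (exp (a * ((ln eps - 1) / a))).
  - destruct (Rle_lt_or_eq_dec (a * Rmin t ((ln eps - 1) / a)) (a * ((ln eps - 1) / a))).
    + apply Rmult_le_compat_l; [lra| apply Rmin_r].
    + left; apply exp_increasing; auto.
    + rewrite e; lra.
  - replace (a * ((ln eps - 1) / a)) with (ln eps - 1) by (field; lra).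
    rewrite <- (exp_ln eps) at 2 by auto. apply exp_increasing. lra.
Qed.

Lemma lam_facts c d b : 0 < c -> 0 < d -> 0 < b ->
  lam1 c d b < 0 /\ 0 < lam2 c d b /\
  d * (lam1 c d b + lam2 c d b) = c /\ d * (lam1 c d b * lam2 c d b) = - b /\
  d * lam1 c d b ^ 2 - c * lam1 c d b - b = 0 /\ d * lam2 c d b ^ 2 - c * lam2 c d b - b = 0.
Proof.
  intros Hc Hd Hb. unfold lam1, lam2.
  set (s := sqrt (c ^ 2 + 4 * b * d)).
  assert (Hs2 : s * s = c ^ 2 + 4 * b * d). { unfold s; apply sqrt_sqrt; nra. }
  assert (Hs0 : 0 <= s) by (unfold s; apply sqrt_pos).
  assert (Hsc : c < s) by nra.
  repeat split.
  - apply Rmult_lt_reg_r with (2 * d); [lra|]. field_simplify; lra.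
  - apply Rdiv_lt_0_compat; lra.
  - field; lra.
  - replace (d * ((c - s) / (2 * d) * ((c + s) / (2 * d)))) with ((c * c - s * s) / (4 * d)) by (field; lra).
    rewrite Hs2. field; lra.
  - replace (d * ((c - s) / (2 * d)) ^ 2 - c * ((c - s) / (2 * d)) - b) with ((s * s - (c^2 + 4*b*d)) / (4 * d)) by (field; lra).
    rewrite Hs2. field; lra.
  - replace (d * ((c + s) / (2 * d)) ^ 2 - c * ((c + s) / (2 * d)) - b) with ((s * s - (c^2 + 4*b*d)) / (4 * d)) by (field; lra).
    rewrite Hs2. field; lra.
Qed.

Lemma maxpr d c b (w w1 w2 : R -> R) A B :
  0 < d -> 0 < b -> 0 < c ->
  (forall t, is_derive w t (w1 t)) -> (forall t, continuous w1 t) ->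
  (forall t, t <> 0 -> is_derive w1 t (w2 t)) ->
  (forall t, Rabs (w t) <= A) -> (forall t, Rabs (w1 t) <= B) ->
  (forall t, t <> 0 -> d * w2 t - c * w1 t - b * w t <= 0) ->
  forall t, 0 <= w t.
Proof.
  intros Hd Hb Hc Dw Cw1 Dw1 BA BB HL.
  destruct (lam_facts c d b Hc Hd Hb) as [H1 [H2 [Hsum [Hprod _]]]].
  set (l1 := lam1 c d b) in *. set (l2 := lam2 c d b) in *.
  set (v := fun t => w1 t - l2 * w t).
  assert (Dv : forall t, t <> 0 -> is_derive v t (w2 t - l2 * w1 t)).
  { intros t Ht. apply der_minus; [apply Dw1; auto| apply der_scal; apply Dw]. }
  assert (Cv : forall t, continuous v t).
  { intros t. apply cont_minus; [apply Cw1| apply cont_scal; eapply der_cont; apply Dw]. }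
  set (E := fun t => exp (- l1 * t) * v t).
  assert (Ev : forall t, E t <= 0).
  { assert (Hni : forall x y, x <= y -> E y <= E x).
    { apply noninc with (dE := fun t => (- l1 * exp (- l1 * t)) * v t + exp (- l1 * t) * (w2 t - l2 * w1 t)).
      - intros t. unfold E. apply (cont_mult (fun t => exp (- l1 * t)) v); [| apply Cv]. eapply der_cont; apply der_expl.
      - intros t Ht. unfold E. apply (der_mult (fun t => exp (- l1 * t)) v); [apply der_expl| apply Dv; auto].
      - intros t Ht. assert (HX : d * (w2 t - (l1 + l2) * w1 t + l1 * l2 * w t) = d * w2 t - c * w1 t - b * w t).
        { rewrite <- Hsum. replace b with (- (d * (l1 * l2))) by lra. ring. }
        assert (HX2 : w2 t - (l1 + l2) * w1 t + l1 * l2 * w t <= 0).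
        { specialize (HL t Ht). nra. }
        assert (He := exp_pos (- l1 * t)). unfold v. nra. }
    intros t. destruct (Rle_or_lt (E t) 0) as [|Hpos]; auto. exfalso.
    set (V := B + l2 * A + 1).
    assert (HV : forall s, Rabs (v s) < V).
    { intros s. unfold v, V. specialize (BA s). specialize (BB s).
      assert (Rabs (w1 s - l2 * w s) <= Rabs (w1 s) + l2 * Rabs (w s)).
      { eapply Rle_trans. apply Rabs_triang. rewrite Rabs_Ropp, Rabs_mult, (Rabs_pos_eq l2) by lra. lra. }
      nra. }
    assert (HV0 : 0 < V). { specialize (HV 0). pose proof (Rabs_pos (v 0)). lra. }
    destruct (exp_small (- l1) (E t / V) t) as [s [Hst Hs]]; [lra| apply Rdiv_lt_0_compat; lra|].
    specialize (Hni s t Hst).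
    assert (E s <= exp (- l1 * s) * V).
    { unfold E. specialize (HV s). pose proof (exp_pos (- l1 * s)).
      pose proof (Rle_abs (v s)). nra. }
    assert (exp (- l1 * s) * V < E t).
    { apply Rmult_lt_reg_r with (/ V). apply Rinv_0_lt_compat; lra.
      rewrite Rmult_assoc, Rinv_r by lra. lra. }
    lra. }
  assert (Vn : forall t, v t <= 0).
  { intros t. specialize (Ev t). unfold E in Ev. pose proof (exp_pos (- l1 * t)). nra. }
  set (F := fun t => exp (- l2 * t) * w t).
  assert (Hni : forall x y, x <= y -> F y <= F x).
  { apply noninc with (dE := fun t => (- l2 * exp (- l2 * t)) * w t + exp (- l2 * t) * w1 t).
    - intros t. eapply der_cont. unfold F. apply (der_mult (fun t => exp (- l2 * t)) w); [apply der_expl| apply Dw].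
    - intros t Ht. unfold F. apply (der_mult (fun t => exp (- l2 * t)) w); [apply der_expl| apply Dw].
    - intros t Ht. specialize (Vn t). unfold v in Vn. pose proof (exp_pos (- l2 * t)). nra. }
  intros t. destruct (Rle_or_lt 0 (w t)) as [|Hneg]; auto. exfalso.
  assert (HFt : F t < 0). { unfold F. pose proof (exp_pos (- l2 * t)). nra. }
  destruct (exp_small l2 (- F t / (A + 1)) (- t)) as [s' [Hst Hs]].
  - lra.
  - assert (0 <= A). { specialize (BA 0). pose proof (Rabs_pos (w 0)). lra. }
    apply Rdiv_lt_0_compat; lra.
  - assert (HA : 0 <= A). { specialize (BA 0). pose proof (Rabs_pos (w 0)). lra. }
    specialize (Hni t (- s') ltac:(lra)).
    replace (l2 * s') with (- l2 * - s') in Hs by ring.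
    assert (- (exp (- l2 * - s') * (A+1)) <= F (- s')).
    { unfold F. specialize (BA (- s')). pose proof (exp_pos (- l2 * - s')).
      pose proof (Rle_abs (- w (- s'))). rewrite Rabs_Ropp in H0. nra. }
    assert (exp (- l2 * - s') * (A + 1) < - F t).
    { apply Rmult_lt_reg_r with (/ (A+1)). apply Rinv_0_lt_compat; lra.
      rewrite Rmult_assoc, Rinv_r by lra. lra. }
    lra.
Qed.


Definition Pf (l : R) (h : R -> R) (t : R) : R :=
  RInt_gen (fun s => exp (l * (t - s)) * h s) (Rbar_locally m_infty) (at_point t).
Definition Qf (l : R) (h : R -> R) (t : R) : R :=
  RInt_gen (fun s => exp (l * (t - s)) * h s) (at_point t) (Rbar_locally p_infty).

Lemma ex_RInt_c (g : R -> R) a b : (forall s, continuous g s) -> ex_RInt g a b.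
Proof. intros H. apply (@ex_RInt_continuous R_CompleteNormedModule). intros; apply H. Qed.

Lemma RInt_exp_bound (g : R -> R) M k x y : k <> 0 -> x <= y ->
  (forall s, continuous g s) -> (forall s, Rabs (g s) <= M * exp (k * s)) ->
  Rabs (RInt g x y) <= M / k * (exp (k * y) - exp (k * x)).
Proof.
  intros Hk Hxy Hc Hb.
  eapply Rle_trans. apply abs_RInt_le; auto. apply ex_RInt_c; auto.
  apply Rle_trans with (RInt (fun s => M * exp (k * s)) x y).
  - apply RInt_le; [exact Hxy| | |].
    + apply (ex_RInt_norm g). apply ex_RInt_c; auto.
    + apply ex_RInt_c. intros s. apply cont_scal. eapply der_cont. apply der_expl.
    + intros; apply Hb.
  - right. apply is_RInt_unique.
    replace (M / k * (exp (k * y) - exp (k * x))) with (minus (M/k*exp(k*y)) (M/k*exp(k*x)))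
      by (unfold minus, plus, opp; simpl; ring).
    apply (is_RInt_ext (fun s => M / k * (k * exp (k * s)))).
    2: apply (is_RInt_derive (fun s => M / k * exp (k * s)) (fun s => M / k * (k * exp (k * s)))).
    + intros. assert (E : forall z, M / k * (k * exp (k * z)) = M * exp (k * z)) by (intros; field; auto).
      apply E.
    + intros. apply der_scal. apply der_expl.
    + intros. apply cont_scal. apply cont_scal. eapply der_cont. apply der_expl.
Qed.

Lemma is_RInt_gen_of_lim (F G : (R -> Prop) -> Prop) {FF : Filter F} {FG : Filter G}
  (g : R -> R) L : (forall s, continuous g s) ->
  filterlim (fun ab : R * R => RInt g (fst ab) (snd ab)) (filter_prod F G) (locally L) ->
  is_RInt_gen g F G L.
Proof.
  intros Hc Hl P HP. specialize (Hl P HP). unfold filtermap in Hl.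
  unfold filtermapi. eapply filter_imp; [| exact Hl].
  intros ab Hab. exists (RInt g (fst ab) (snd ab)). split; auto.
  apply (@RInt_correct R_CompleteNormedModule). apply ex_RInt_c; auto.
Qed.

Lemma lim_bound {T} (F : (T -> Prop) -> Prop) {FF : ProperFilter F} (f : T -> R) L Bd :
  filterlim f F (locally L) -> F (fun x => Rabs (f x) <= Bd) -> Rabs L <= Bd.
Proof.
  intros Hl Hb. apply Rabs_le. split.
  - assert (H := filterlim_le (F := F) (fun _ => - Bd) f (- Bd) L).
    simpl in H. apply H; auto.
    + eapply filter_imp; [|exact Hb]. intros x Hx; simpl in Hx; apply Rabs_le_between in Hx; lra.
    + apply filterlim_const.
  - assert (H := filterlim_le (F := F) f (fun _ => Bd) L Bd).
    simpl in H. apply H; auto.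
    + eapply filter_imp; [|exact Hb]. intros x Hx; simpl in Hx; apply Rabs_le_between in Hx; lra.
    + apply filterlim_const.
Qed.


Lemma RInt_exp_bound2 (g : R -> R) M k x y : k <> 0 ->
  (forall s, continuous g s) -> (forall s, Rabs (g s) <= M * exp (k * s)) ->
  Rabs (RInt g x y) <= M / k * (exp (k * Rmax x y) - exp (k * Rmin x y)).
Proof.
  intros Hk Hc Hb. destruct (Rle_or_lt x y) as [H|H].
  - rewrite Rmax_right, Rmin_left by lra. apply RInt_exp_bound; auto.
  - rewrite Rmax_left, Rmin_right by lra.
    rewrite <- (opp_RInt_swap g y x) by (apply ex_RInt_c; auto).
    change (Rabs (- RInt g y x) <= M / k * (exp (k * x) - exp (k * y))).
    rewrite Rabs_Ropp. apply (RInt_exp_bound g M k); auto; try (apply Rgt_not_eq; lra); lra.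
Qed.

Lemma ball_R (x y e : R) : Rabs (y - x) < e -> @ball R_UniformSpace x e y.
Proof. intros H. exact H. Qed.

Lemma M_nonneg (g : R -> R) M k : (forall s, Rabs (g s) <= M * exp (k * s)) -> 0 <= M.
Proof.
  intros Hb. specialize (Hb 0). pose proof (Rabs_pos (g 0)). pose proof (exp_pos (k * 0)). nra.
Qed.

Lemma exist_left (g : R -> R) M k b : 0 < k -> (forall s, continuous g s) ->
  (forall s, Rabs (g s) <= M * exp (k * s)) ->
  exists L, is_RInt_gen g (Rbar_locally m_infty) (at_point b) L /\ Rabs L <= M / k * exp (k * b).
Proof.
  intros Hk Hc Hb. pose proof (M_nonneg g M k Hb) as HM.
  assert (PF : ProperFilter (filter_prod (Rbar_locally m_infty) (at_point b))).
  { apply filter_prod_proper; try apply Rbar_locally_filter; try apply at_point_filter. }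
  destruct (proj1 (filterlim_locally_cauchy (U := R_CompleteSpace)
     (fun ab : R * R => RInt g (fst ab) (snd ab)))) as [L HL].
  - intros eps.
    destruct (exp_small k (eps * k / (M + 1)) b) as [N [HNb HN]]; auto.
    { apply Rdiv_lt_0_compat; [apply Rmult_lt_0_compat; [apply cond_pos| auto]| lra]. }
    exists (fun ab : R * R => fst ab < N /\ snd ab = b). split.
    + apply Filter_prod with (fun x => x < N) (fun y => y = b).
      * exists N. auto.
      * reflexivity.
      * intros x y H1 H2. simpl. auto.
    + intros [u1 u2] [v1 v2] [Hu1 Hu2] [Hv1 Hv2]. simpl in *. subst u2 v2.
      apply ball_R.
      assert (Hch : RInt g v1 u1 + RInt g u1 b = RInt g v1 b)
        by (apply (RInt_Chasles g v1 u1 b); apply ex_RInt_c; auto).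
      rewrite <- Hch.
      unfold Rminus; rewrite Rplus_assoc, Rplus_opp_r, Rplus_0_r.
      eapply Rle_lt_trans. apply (RInt_exp_bound2 g M k); auto; apply Rgt_not_eq; lra.
      assert (exp (k * Rmax v1 u1) <= exp (k * N)).
      { destruct (Rle_lt_or_eq_dec (k * Rmax v1 u1) (k * N)).
        - apply Rmult_le_compat_l; [lra| apply Rmax_lub; lra].
        - left; apply exp_increasing; auto.
        - rewrite e; lra. }
      pose proof (exp_pos (k * Rmin v1 u1)).
      apply Rle_lt_trans with (M / k * exp (k * N)).
      { apply Rmult_le_compat_l. apply Rdiv_le_0_compat; lra. lra. }
      assert (M / k * exp (k*N) <= M/k * (eps*k/(M+1))).
      { apply Rmult_le_compat_l. apply Rdiv_le_0_compat; lra. lra. }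
      assert (E1 : M/k*(eps*k/(M+1)) = eps * (M/(M+1))) by (field; lra).
      assert (M/(M+1) < 1).
      { apply (Rmult_lt_reg_r (M+1)); [lra|]. unfold Rdiv; rewrite Rmult_assoc, Rinv_l; lra. }
      pose proof (cond_pos eps). nra.
  - exists L. split.
    + apply is_RInt_gen_of_lim; auto. apply Rbar_locally_filter. apply at_point_filter.
    + apply (lim_bound _ _ L _ HL).
      apply Filter_prod with (fun x => x < b) (fun y => y = b).
      * exists b. auto.
      * reflexivity.
      * intros x y H1 H2. simpl. subst y.
        eapply Rle_trans. apply (RInt_exp_bound g M k); auto; try (apply Rgt_not_eq; lra); lra.
        pose proof (exp_pos (k * x)).
        apply Rmult_le_compat_l. apply Rdiv_le_0_compat; lra. lra.
Qed.


Lemma exp_mono_le x y : x <= y -> exp x <= exp y.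
Proof.
  intros H. destruct (Rle_lt_or_eq_dec x y H) as [H'| ->]; [left; apply exp_increasing; auto| lra].
Qed.

Lemma exist_right (g : R -> R) M k b : k < 0 -> (forall s, continuous g s) ->
  (forall s, Rabs (g s) <= M * exp (k * s)) ->
  exists L, is_RInt_gen g (at_point b) (Rbar_locally p_infty) L /\ Rabs L <= M / (- k) * exp (k * b).
Proof.
  intros Hk Hc Hb. pose proof (M_nonneg g M k Hb) as HM.
  assert (PF : ProperFilter (filter_prod (at_point b) (Rbar_locally p_infty))).
  { apply filter_prod_proper; try apply Rbar_locally_filter; try apply at_point_filter. }
  destruct (proj1 (filterlim_locally_cauchy (U := R_CompleteSpace)
     (fun ab : R * R => RInt g (fst ab) (snd ab)))) as [L HL].
  - intros eps.
    destruct (exp_small (- k) (eps * (- k) / (M + 1)) (- b)) as [s [HNb HN]]; [lra| |].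
    { apply Rdiv_lt_0_compat; [apply Rmult_lt_0_compat; [apply cond_pos| lra]| lra]. }
    set (N := - s).
    assert (HN' : exp (k * N) < eps * (- k) / (M + 1)).
    { unfold N. replace (k * - s) with (- k * s) by ring. exact HN. }
    exists (fun ab : R * R => fst ab = b /\ N < snd ab). split.
    + apply Filter_prod with (fun x => x = b) (fun y => N < y).
      * reflexivity.
      * exists N. auto.
      * intros x y H1 H2. simpl. auto.
    + intros [u1 u2] [v1 v2] [Hu1 Hu2] [Hv1 Hv2]. simpl in *. subst u1 v1.
      apply ball_R.
      assert (Hch : RInt g b u2 + RInt g u2 v2 = RInt g b v2)
        by (apply (RInt_Chasles g b u2 v2); apply ex_RInt_c; auto).
      rewrite <- Hch.
      rewrite Rplus_comm. unfold Rminus; rewrite Rplus_assoc, Rplus_opp_r, Rplus_0_r.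
      eapply Rle_lt_trans. apply (RInt_exp_bound2 g M k); auto; apply Rlt_not_eq; lra.
      assert (exp (k * Rmin u2 v2) <= exp (k * N)).
      { apply exp_mono_le. apply Rmult_le_compat_neg_l; [lra|]. apply Rmin_glb; lra. }
      pose proof (exp_pos (k * Rmax u2 v2)).
      replace (M / k * (exp (k * Rmax u2 v2) - exp (k * Rmin u2 v2)))
        with (M / (- k) * (exp (k * Rmin u2 v2) - exp (k * Rmax u2 v2))) by (field; lra).
      apply Rle_lt_trans with (M / (- k) * exp (k * N)).
      { apply Rmult_le_compat_l. apply Rdiv_le_0_compat; lra. lra. }
      assert (M / (-k) * exp (k*N) <= M/(-k) * (eps*(-k)/(M+1))).
      { apply Rmult_le_compat_l. apply Rdiv_le_0_compat; lra. lra. }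
      assert (E1 : M/(-k)*(eps*(-k)/(M+1)) = eps * (M/(M+1))) by (field; lra).
      assert (M/(M+1) < 1).
      { apply (Rmult_lt_reg_r (M+1)); [lra|]. unfold Rdiv; rewrite Rmult_assoc, Rinv_l; lra. }
      pose proof (cond_pos eps). nra.
  - exists L. split.
    + apply is_RInt_gen_of_lim; auto. apply at_point_filter. apply Rbar_locally_filter.
    + apply (lim_bound _ _ L _ HL).
      apply Filter_prod with (fun x => x = b) (fun y => b < y).
      * reflexivity.
      * exists b. auto.
      * intros x y H1 H2. simpl. subst x.
        eapply Rle_trans. apply (RInt_exp_bound g M k); auto; try (apply Rlt_not_eq; lra); lra.
        pose proof (exp_pos (k * y)).
        replace (M / k * (exp (k * y) - exp (k * b)))
          with (M / (- k) * (exp (k * b) - exp (k * y))) by (field; lra).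
        apply Rmult_le_compat_l. apply Rdiv_le_0_compat; lra. lra.
Qed.



Lemma der_const (k x : R) : is_derive (fun _ : R => k) x 0.
Proof. exact (@is_derive_const R_AbsRing R_NormedModule k x). Qed.

Lemma is_derive_RInt0 (g : R -> R) t : (forall s, continuous g s) ->
  is_derive (fun x => RInt g 0 x) t (g t).
Proof.
  intros Hc. apply (is_derive_RInt g (fun x => RInt g 0 x) 0 t).
  - apply filter_forall. intros x. apply (@RInt_correct R_CompleteNormedModule). apply ex_RInt_c; auto.
  - apply Hc.
Qed.

Lemma g_bound (l : R) (h : R -> R) M s : Rabs (h s) <= M ->
  Rabs (exp (- l * s) * h s) <= M * exp (- l * s).
Proof.
  intros H. rewrite Rabs_mult, Rabs_pos_eq by (left; apply exp_pos).
  pose proof (exp_pos (- l * s)). nra.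
Qed.

Lemma g_cont (l : R) (h : R -> R) : (forall s, continuous h s) ->
  forall s, continuous (fun s => exp (- l * s) * h s) s.
Proof.
  intros H s. apply (cont_mult (fun s => exp (- l * s)) h). eapply der_cont; apply der_expl. apply H.
Qed.

Lemma P_props l h M : l < 0 -> (forall s, continuous h s) -> (forall s, Rabs (h s) <= M) ->
  (forall t, is_derive (Pf l h) t (l * Pf l h t + h t)) /\ (forall t, Rabs (Pf l h t) <= M / (- l)).
Proof.
  intros Hl Hc Hb.
  set (g := fun s => exp (- l * s) * h s).
  assert (Hgc : forall s, continuous g s) by (apply g_cont; auto).
  assert (Hgb : forall s, Rabs (g s) <= M * exp (- l * s)) by (intros; apply g_bound; auto).
  destruct (exist_left g M (- l) 0) as [L0 [HL0 _]]; auto; try lra.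
  assert (HLt : forall t, is_RInt_gen g (Rbar_locally m_infty) (at_point t) (L0 + RInt g 0 t)).
  { intros t. apply (is_RInt_gen_Chasles g 0 L0 (RInt g 0 t)); auto.
    apply is_RInt_gen_at_point. apply (@RInt_correct R_CompleteNormedModule). apply ex_RInt_c; auto. }
  assert (HP : forall t, Pf l h t = exp (l * t) * (L0 + RInt g 0 t)).
  { intros t. unfold Pf. apply is_RInt_gen_unique.
    apply (is_RInt_gen_ext (fun s => scal (exp (l * t)) (g s))).
    - apply filter_forall. intros ab x _. unfold g. change (exp (l * t) * (exp (- l * x) * h x) = exp (l * (t - x)) * h x).
      rewrite <- Rmult_assoc, <- exp_plus. f_equal. f_equal. ring.
    - exact (is_RInt_gen_scal g (exp (l * t)) (L0 + RInt g 0 t) (HLt t)). }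
  split.
  - intros t. apply (is_derive_ext (fun t => exp (l * t) * (L0 + RInt g 0 t))).
    { intros; symmetry; apply HP. }
    eapply is_derive_eq.
    + apply (der_mult (fun t => exp (l * t)) (fun t => L0 + RInt g 0 t)).
      apply der_expl. apply (der_plus (fun _ => L0) (fun x => RInt g 0 x) t 0 (g t)).
      apply der_const. apply is_derive_RInt0; auto.
    + rewrite HP. unfold g. replace (exp (l * t) * (0 + exp (- l * t) * h t)) with ((exp (l * t) * exp (- l * t)) * h t) by ring.
      rewrite <- exp_plus. replace (l * t + - l * t) with 0 by ring. rewrite exp_0. ring.
  - intros t. rewrite HP.
    destruct (exist_left g M (- l) t) as [Lt [HLt' HB]]; auto; try lra.
    assert (Lt = L0 + RInt g 0 t).
    { rewrite <- (is_RInt_gen_unique _ _ HLt'). apply is_RInt_gen_unique. apply HLt. }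
    subst Lt. rewrite Rabs_mult, (Rabs_pos_eq (exp (l * t))) by (left; apply exp_pos).
    pose proof (exp_pos (l * t)).
    apply Rle_trans with (exp (l * t) * (M / - l * exp (- l * t))).
    + apply Rmult_le_compat_l; lra.
    + replace (exp (l * t) * (M / - l * exp (- l * t))) with (M / - l * (exp (l * t) * exp (- l * t))) by ring.
      rewrite <- exp_plus. replace (l * t + - l * t) with 0 by ring. rewrite exp_0. lra.
Qed.


Lemma Q_props l h M : 0 < l -> (forall s, continuous h s) -> (forall s, Rabs (h s) <= M) ->
  (forall t, is_derive (Qf l h) t (l * Qf l h t - h t)) /\ (forall t, Rabs (Qf l h t) <= M / l).
Proof.
  intros Hl Hc Hb.
  set (g := fun s => exp (- l * s) * h s).
  assert (Hgc : forall s, continuous g s) by (apply g_cont; auto).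
  assert (Hgb : forall s, Rabs (g s) <= M * exp (- l * s)) by (intros; apply g_bound; auto).
  destruct (exist_right g M (- l) 0) as [R0 [HR0 _]]; auto; try lra.
  assert (HRt : forall t, is_RInt_gen g (at_point t) (Rbar_locally p_infty) (R0 - RInt g 0 t)).
  { intros t.
    assert (Hsw : RInt g t 0 = - RInt g 0 t).
    { rewrite <- (opp_RInt_swap g 0 t); [reflexivity| apply ex_RInt_c; auto]. }
    replace (R0 - RInt g 0 t) with (plus (RInt g t 0) R0)
      by (rewrite Hsw; unfold plus; simpl; ring).
    apply (is_RInt_gen_Chasles g 0 (RInt g t 0) R0); auto.
    apply is_RInt_gen_at_point. apply (@RInt_correct R_CompleteNormedModule). apply ex_RInt_c; auto. }
  assert (HQ : forall t, Qf l h t = exp (l * t) * (R0 - RInt g 0 t)).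
  { intros t. unfold Qf. apply is_RInt_gen_unique.
    apply (is_RInt_gen_ext (fun s => scal (exp (l * t)) (g s))).
    - apply filter_forall. intros ab x _. unfold g. change (exp (l * t) * (exp (- l * x) * h x) = exp (l * (t - x)) * h x).
      rewrite <- Rmult_assoc, <- exp_plus. f_equal. f_equal. ring.
    - exact (is_RInt_gen_scal g (exp (l * t)) (R0 - RInt g 0 t) (HRt t)). }
  split.
  - intros t. apply (is_derive_ext (fun t => exp (l * t) * (R0 - RInt g 0 t))).
    { intros; symmetry; apply HQ. }
    eapply is_derive_eq.
    + apply (der_mult (fun t => exp (l * t)) (fun t => R0 - RInt g 0 t)).
      apply der_expl. apply (der_minus (fun _ => R0) (fun x => RInt g 0 x) t 0 (g t)).
      apply der_const. apply is_derive_RInt0; auto.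
    + rewrite HQ. unfold g. replace (exp (l * t) * (0 - exp (- l * t) * h t)) with (- ((exp (l * t) * exp (- l * t)) * h t)) by ring.
      rewrite <- exp_plus. replace (l * t + - l * t) with 0 by ring. rewrite exp_0. ring.
  - intros t. rewrite HQ.
    destruct (exist_right g M (- l) t) as [Lt [HLt' HB]]; auto; try lra.
    assert (Lt = R0 - RInt g 0 t).
    { rewrite <- (is_RInt_gen_unique _ _ HLt'). apply is_RInt_gen_unique. apply HRt. }
    subst Lt. rewrite Ropp_involutive in HB.
    rewrite Rabs_mult, (Rabs_pos_eq (exp (l * t))) by (left; apply exp_pos).
    pose proof (exp_pos (l * t)).
    apply Rle_trans with (exp (l * t) * (M / l * exp (- l * t))).
    + apply Rmult_le_compat_l; lra.
    + replace (exp (l * t) * (M / l * exp (- l * t))) with (M / l * (exp (l * t) * exp (- l * t))) by ring.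
      rewrite <- exp_plus. replace (l * t + - l * t) with 0 by ring. rewrite exp_0. lra.
Qed.


Definition kap c d b := / (d * (lam2 c d b - lam1 c d b)).
Definition G0s c d b (h : R -> R) t := kap c d b * (Pf (lam1 c d b) h t + Qf (lam2 c d b) h t).
Definition G1s c d b (h : R -> R) t :=
  kap c d b * (lam1 c d b * Pf (lam1 c d b) h t + lam2 c d b * Qf (lam2 c d b) h t).
Definition G2s c d b (h : R -> R) t :=
  kap c d b * (lam1 c d b * (lam1 c d b * Pf (lam1 c d b) h t + h t)
             + lam2 c d b * (lam2 c d b * Qf (lam2 c d b) h t - h t)).

Lemma abs_comb a b x y p q : Rabs x <= p -> Rabs y <= q ->
  Rabs (a * x + b * y) <= Rabs a * p + Rabs b * q.
Proof.
  intros Hx Hy. eapply Rle_trans. apply Rabs_triang. rewrite !Rabs_mult.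
  apply Rplus_le_compat; apply Rmult_le_compat_l; auto; apply Rabs_pos.
Qed.

Lemma G_props (d c b M : R) (h : R -> R) : 0 < d -> 0 < c -> 0 < b ->
  (forall s, continuous h s) -> (forall s, Rabs (h s) <= M) ->
  (forall t, is_derive (G0s c d b h) t (G1s c d b h t)) /\
  (forall t, is_derive (G1s c d b h) t (G2s c d b h t)) /\
  (forall t, continuous (G2s c d b h) t) /\
  (exists B, forall t, Rabs (G0s c d b h t) <= B) /\
  (exists B, forall t, Rabs (G1s c d b h t) <= B) /\
  (exists B, forall t, Rabs (G2s c d b h t) <= B) /\
  (forall t, d * G2s c d b h t - c * G1s c d b h t - b * G0s c d b h t = - h t).
Proof.
  intros Hd Hc Hb Hhc Hhb.
  destruct (lam_facts c d b Hc Hd Hb) as [H1 [H2 [_ [_ [E1 E2]]]]].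
  set (l1 := lam1 c d b) in *. set (l2 := lam2 c d b) in *.
  destruct (P_props l1 h M H1 Hhc Hhb) as [DP BP].
  destruct (Q_props l2 h M H2 Hhc Hhb) as [DQ BQ].
  set (K := kap c d b).
  unfold G0s, G1s, G2s. fold l1 l2. fold K.
  assert (CP : forall t, continuous (Pf l1 h) t) by (intros; eapply der_cont; apply DP).
  assert (CQ : forall t, continuous (Qf l2 h) t) by (intros; eapply der_cont; apply DQ).
  split.
  { intros t. eapply is_derive_eq.
    apply (der_scal (fun t => Pf l1 h t + Qf l2 h t)).
    apply (der_plus (Pf l1 h) (Qf l2 h)); [apply DP| apply DQ].
    ring. }
  split.
  { intros t.
    apply (der_scal (fun t => l1 * Pf l1 h t + l2 * Qf l2 h t)).
    apply (der_plus (fun t => l1 * Pf l1 h t) (fun t => l2 * Qf l2 h t));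
      apply der_scal; [apply DP| apply DQ]. }
  split.
  { intros t. apply cont_scal.
    apply (cont_plus (fun t => l1 * (l1 * Pf l1 h t + h t)) (fun t => l2 * (l2 * Qf l2 h t - h t)));
      apply cont_scal.
    + apply (cont_plus (fun t => l1 * Pf l1 h t) h); [apply cont_scal|]; auto.
    + apply (cont_minus (fun t => l2 * Qf l2 h t) h); [apply cont_scal|]; auto. }
  split.
  { exists (Rabs K * (M / - l1) + Rabs K * (M / l2)). intros t.
    rewrite Rmult_plus_distr_l. apply abs_comb; auto. }
  split.
  { exists (Rabs (K * l1) * (M / - l1) + Rabs (K * l2) * (M / l2)). intros t.
    replace (K * (l1 * Pf l1 h t + l2 * Qf l2 h t)) with ((K * l1) * Pf l1 h t + (K * l2) * Qf l2 h t) by ring.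
    apply abs_comb; auto. }
  split.
  { exists (Rabs (K * l1 * l1) * (M / - l1) + Rabs (K * l2 * l2) * (M / l2) + Rabs (K * (l1 - l2)) * M).
    intros t.
    replace (K * (l1 * (l1 * Pf l1 h t + h t) + l2 * (l2 * Qf l2 h t - h t)))
      with (((K * l1 * l1) * Pf l1 h t + (K * l2 * l2) * Qf l2 h t) + (K * (l1 - l2)) * h t) by ring.
    eapply Rle_trans. apply Rabs_triang. apply Rplus_le_compat.
    + apply abs_comb; auto.
    + rewrite Rabs_mult. apply Rmult_le_compat_l; auto. apply Rabs_pos. }
  intros t.
    replace (d * (K * (l1 * (l1 * Pf l1 h t + h t) + l2 * (l2 * Qf l2 h t - h t))) -
      c * (K * (l1 * Pf l1 h t + l2 * Qf l2 h t)) - b * (K * (Pf l1 h t + Qf l2 h t)))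
    with (K * (Pf l1 h t * (d * l1 ^ 2 - c * l1 - b) + Qf l2 h t * (d * l2 ^ 2 - c * l2 - b) + d * (l1 - l2) * h t)) by ring.
    rewrite E1, E2. unfold K, kap. fold l1 l2. field. split; lra.
Qed.


Lemma gamma_range {n} (K : vec n) (g : vfun n) : in_Gamma K g -> forall t i, 0 <= g t i <= K i.
Proof.
  intros [_ [Hmon [Hm Hp]]] t i. split.
  - destruct (Rle_or_lt 0 (g t i)) as [|Hneg]; auto. exfalso.
    assert (H := proj2 (is_lim_spec _ _ _) (Hm i)). simpl in H.
    destruct (H (mkposreal (- g t i) ltac:(lra))) as [N HN]. simpl in HN.
    specialize (HN (Rmin t (N - 1)) ltac:(apply Rle_lt_trans with (N - 1); [apply Rmin_r| lra])).
    specialize (Hmon _ _ i (Rmin_l t (N - 1))).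
    rewrite Rminus_0_r in HN. apply Rabs_lt_between in HN. lra.
  - destruct (Rle_or_lt (g t i) (K i)) as [|Hbig]; auto. exfalso.
    assert (H := proj2 (is_lim_spec _ _ _) (Hp i)). simpl in H.
    destruct (H (mkposreal (g t i - K i) ltac:(lra))) as [N HN]. simpl in HN.
    specialize (HN (Rmax t (N + 1)) ltac:(apply Rlt_le_trans with (N + 1); [lra| apply Rmax_r])).
    specialize (Hmon _ _ i (Rmax_l t (N + 1))).
    apply Rabs_lt_between in HN. lra.
Qed.

Lemma lip_vec {n} (g r : vfun n) : (forall t i, is_derive (fun s => g s i) t (r t i)) ->
  Defs.bounded r -> exists L, 0 <= L /\ forall x y i, Rabs (g x i - g y i) <= L * Rabs (x - y).
Proof.
  intros Hd [M HM]. exists (Rabs M). split. apply Rabs_pos.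
  intros x y i. apply (lip_of_deriv (fun s => g s i) (fun s => r s i)).
  - intros; apply Hd.
  - intros t. eapply Rle_trans. apply HM. apply Rle_abs.
Qed.

Lemma cont_on_lip {n} (g : vfun n) L (u : R -> R) A a b : 0 <= L -> 0 <= A ->
  (forall x y i, Rabs (g x i - g y i) <= L * Rabs (x - y)) ->
  (forall x y, Rabs (u x - u y) <= A * Rabs (x - y)) -> cont_on a b (fun th => g (u th)).
Proof.
  intros HL HA Hg Hu x _ eps He. exists (eps / (L * A + 1)). split.
  - apply Rdiv_lt_0_compat; nra.
  - intros y _ Hy i. eapply Rle_lt_trans. apply Hg.
    apply Rle_lt_trans with (L * (A * Rabs (y - x))).
    + apply Rmult_le_compat_l; auto.
    + assert (Rabs (y - x) * (L * A + 1) < eps).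
      { apply Rmult_lt_reg_r with (/ (L * A + 1)). apply Rinv_0_lt_compat; nra.
        rewrite Rmult_assoc, Rinv_r by nra. rewrite Rmult_1_r. exact Hy. }
      pose proof (Rabs_pos (y - x)). nra.
Qed.

Lemma unif_bound {n} (g : vfun n) : (forall i, exists B, forall t, Rabs (g t i) <= B) -> Defs.bounded g.
Proof.
  intros H.
  assert (Hl : forall l : list 'I_n, exists B, forall i, List.In i l -> forall t, Rabs (g t i) <= B).
  { induction l as [|x l IH].
    - exists 0. intros i [].
    - destruct IH as [M HM]. destruct (H x) as [Bx HBx]. exists (Rmax Bx M). intros i [<-|Hi] t.
      + eapply Rle_trans; [apply HBx| apply Rmax_l].
      + eapply Rle_trans; [apply HM; exact Hi| apply Rmax_r]. }
  destruct (Hl (ord_enum n)) as [M HM]. exists M. intros t i. apply HM.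
  apply FinB.in_In. apply mem_ord_enum.
Qed.



Lemma cont_hat {n} (u : vec n) a b : cont_on a b (hat u).
Proof.
  intros x _ eps He. exists 1. split; [lra|]. intros y _ _ i. unfold hat.
  rewrite Rminus_diag, Rabs_R0; auto.
Qed.

Lemma abs_sub_le x y A B : Rabs x <= A -> Rabs y <= B -> Rabs (x - y) <= A + B.
Proof. intros. unfold Rminus. eapply Rle_trans; [apply Rabs_triang|]. rewrite Rabs_Ropp. lra. Qed.

Lemma shift0 {n} (g : vfun n) t : shift g t 0 = g t.
Proof. unfold shift; rewrite Rplus_0_r; auto. Qed.

Theorem mainTheorem2 (n : nat) (tau c : R) (D K beta : vec n)
  (f : vfun n -> vec n) (phi phi0 : vfun n) :
  (0 < n)%nat -> 0 <= tau -> 0 < c ->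
  (forall i, 0 < D i) -> (forall i, 0 < K i) ->
  f_local tau f -> f_continuous tau f ->
  (forall i, f (hat vzero) i = 0) -> (forall i, f (hat K) i = 0) ->
  (forall u : vec n, vle vzero u -> vle u K ->
     ~ (forall i, u i = 0) -> ~ (forall i, u i = K i) ->
     ~ (forall i, f (hat u) i = 0)) ->
  (forall i, 0 < beta i) ->
  (forall ph ps : vfun n, cont_on (- (c * tau)) 0 ph -> cont_on (- (c * tau)) 0 ps ->
     (forall th, - (c * tau) <= th <= 0 ->
        vle vzero (ps th) /\ vle (ps th) (ph th) /\ vle (ph th) K) ->
     forall i, f_c c f ph i - f_c c f ps i + beta i * (ph 0 i - ps 0 i) >= 0) ->
  in_Gamma K phi -> in_Gamma K phi0 ->
  quasi_lower c D f phi -> quasi_upper c D f phi0 ->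
  (forall t i, phi t i <= phi0 t i) ->
  let phi1 := Gop c D beta (Hop c f beta phi0) in
  in_Gamma K phi1 /\
  (upper_solution c D f phi1 /\ forall t i, phi t i <= phi1 t i /\ phi1 t i <= phi0 t i).
Proof.
  intros Hn Htau Hc HD HK Hloc Hcont Hf0 HfK Hnz Hbeta Hmono Gphi Gphi0 Qlow Qup Hle phi1.
  destruct Qlow as [p1 [p2 [[Dp [Cp1 [Bp [Bp1 [Dp1 [Cp2 [Bp2 _]]]]]]] Wp]]].
  destruct Qup as [q1 [q2 [[Dq [Cq1 [Bq [Bq1 [Dq1 [Cq2 [Bq2 _]]]]]]] Wq]]].
  pose proof (gamma_range K phi Gphi) as Rp.
  pose proof (gamma_range K phi0 Gphi0) as Rq.
  destruct (lip_vec phi p1 Dp Bp1) as [Lp [HLp Lipp]].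
  destruct (lip_vec phi0 q1 Dq Bq1) as [Lq [HLq Lipq]].
  assert (Csh : forall (g : vfun n) L, 0 <= L -> (forall x y i, Rabs (g x i - g y i) <= L * Rabs (x - y)) ->
     forall t, cont_on (- (c * tau)) 0 (shift g t)).
  { intros g L HL Hg t. unfold shift. apply (cont_on_lip g L (fun s => t + s) 1); auto; try lra.
    intros x y. replace (t + x - (t + y)) with (x - y) by ring. lra. }
  set (hh := Hop c f beta phi0).
  assert (hr : forall t i, 0 <= hh t i <= beta i * K i).
  { intros t i. unfold hh, Hop. split.
    - assert (X := Hmono (shift phi0 t) (hat vzero) (Csh phi0 Lq HLq Lipq t) (cont_hat _ _ _)).
      assert (E0 : f_c c f (hat vzero) i = 0) by exact (Hf0 i).
      refine (_ (X _ i)).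
      + rewrite E0, shift0. change (hat vzero 0 i) with 0. lra.
      + intros th _. split; [|split]; intros j; unfold hat, vzero, shift; simpl;
          [lra| apply Rq| apply Rq].
    - assert (X := Hmono (hat K) (shift phi0 t) (cont_hat _ _ _) (Csh phi0 Lq HLq Lipq t)).
      assert (E0 : f_c c f (hat K) i = 0) by exact (HfK i).
      refine (_ (X _ i)).
      + rewrite E0, shift0. change (hat K 0 i) with (K i). lra.
      + intros th _. split; [|split]; intros j; unfold hat, vzero, shift; simpl;
          [apply Rq| apply Rq| lra]. }
  assert (hm : forall t s i, t <= s -> hh t i <= hh s i).
  { intros t s i Hts. unfold hh, Hop.
    assert (X := Hmono (shift phi0 s) (shift phi0 t) (Csh phi0 Lq HLq Lipq s) (Csh phi0 Lq HLq Lipq t)).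
    refine (_ (X _ i)).
    + rewrite !shift0. lra.
    + intros th _. split; [|split]; intros j; unfold vzero, shift; simpl;
        [apply Rq| | apply Rq].
      destruct Gphi0 as [_ [Hmon _]]. apply Hmon. lra. }
  assert (hle : forall t i, Hop c f beta phi t i <= hh t i).
  { intros t i. unfold hh, Hop.
    assert (X := Hmono (shift phi0 t) (shift phi t) (Csh phi0 Lq HLq Lipq t) (Csh phi Lp HLp Lipp t)).
    refine (_ (X _ i)).
    + rewrite !shift0. lra.
    + intros th _. split; [|split]; intros j; unfold vzero, shift; simpl;
        [apply Rp| apply Hle | apply Rq]. }
  assert (hc : forall i t, continuous (fun s => hh s i) t).
  { intros i t0. unfold hh, Hop.
    apply (cont_plus (fun s => f_c c f (shift phi0 s) i) (fun s => beta i * phi0 s i)).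
    2: { apply cont_scal. eapply der_cont. apply Dq. }
    apply cont_of_eps. intros eps He.
    assert (Cphi : forall t, cont_on (- tau) 0 (fun th => phi0 (t + c * th))).
    { intros t. apply (cont_on_lip phi0 Lq (fun th => t + c * th) c); auto; try lra.
      intros x y. replace (t + c * x - (t + c * y)) with (c * (x - y)) by ring.
      rewrite Rabs_mult, Rabs_pos_eq by lra. lra. }
    destruct (Hcont _ (Cphi t0) eps He) as [del [Hdel Hf]].
    exists (del / (Lq + 1)). split. apply Rdiv_lt_0_compat; lra.
    intros y Hy. apply (Hf (fun th => phi0 (y + c * th)) (Cphi y)).
    intros th _ j. eapply Rle_lt_trans. apply Lipq.
    replace (y + c * th - (t0 + c * th)) with (y - t0) by ring.
    assert (Rabs (y - t0) * (Lq + 1) < del).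
    { apply Rmult_lt_reg_r with (/ (Lq + 1)). apply Rinv_0_lt_compat; lra.
      rewrite Rmult_assoc, Rinv_r by lra. rewrite Rmult_1_r. exact Hy. }
    pose proof (Rabs_pos (y - t0)). nra. }

  assert (GP : forall i,
    (forall t, is_derive (G0s c (D i) (beta i) (fun s => hh s i)) t (G1s c (D i) (beta i) (fun s => hh s i) t)) /\
    (forall t, is_derive (G1s c (D i) (beta i) (fun s => hh s i)) t (G2s c (D i) (beta i) (fun s => hh s i) t)) /\
    (forall t, continuous (G2s c (D i) (beta i) (fun s => hh s i)) t) /\
    (exists B, forall t, Rabs (G0s c (D i) (beta i) (fun s => hh s i) t) <= B) /\
    (exists B, forall t, Rabs (G1s c (D i) (beta i) (fun s => hh s i) t) <= B) /\
    (exists B, forall t, Rabs (G2s c (D i) (beta i) (fun s => hh s i) t) <= B) /\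
    (forall t, D i * G2s c (D i) (beta i) (fun s => hh s i) t - c * G1s c (D i) (beta i) (fun s => hh s i) t
       - beta i * G0s c (D i) (beta i) (fun s => hh s i) t = - hh t i)).
  { intros i. apply (G_props (D i) c (beta i) (beta i * K i) (fun s => hh s i)); auto.
    intros s. apply Rabs_le. specialize (hr s i). lra. }
  set (r1 := fun t i => G1s c (D i) (beta i) (fun s => hh s i) t).
  set (r2 := fun t i => G2s c (D i) (beta i) (fun s => hh s i) t).
  assert (Ephi : forall t i, phi1 t i = G0s c (D i) (beta i) (fun s => hh s i) t) by (intros; reflexivity).
  assert (DG0 : forall t i, is_derive (fun s => phi1 s i) t (r1 t i)).
  { intros t i. destruct (GP i) as [X _]. exact (X t). }
  assert (DG1 : forall t i, is_derive (fun s => r1 s i) t (r2 t i)).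
  { intros t i. destruct (GP i) as [_ [X _]]. exact (X t). }
  assert (CG2 : forall t i, continuous (fun s => r2 s i) t).
  { intros t i. destruct (GP i) as [_ [_ [X _]]]. exact (X t). }
  assert (ODE : forall t i, D i * r2 t i - c * r1 t i - beta i * phi1 t i = - hh t i).
  { intros t i. destruct (GP i) as [_ [_ [_ [_ [_ [_ X]]]]]]. exact (X t). }
  assert (Bphi1 : Defs.bounded phi1).
  { apply unif_bound. intros i. destruct (GP i) as [_ [_ [_ [[B HB] _]]]]. exists B. exact HB. }
  assert (Br1 : Defs.bounded r1).
  { apply unif_bound. intros i. destruct (GP i) as [_ [_ [_ [_ [[B HB] _]]]]]. exists B. exact HB. }
  assert (Br2 : Defs.bounded r2).
  { apply unif_bound. intros i. destruct (GP i) as [_ [_ [_ [_ [_ [[B HB] _]]]]]]. exists B. exact HB. }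
  destruct Bphi1 as [B0 HB0]. destruct Br1 as [B1 HB1].
  destruct Bq as [MQ HMQ]. destruct Bq1 as [MQ1 HMQ1].
  destruct Bp as [MP HMP]. destruct Bp1 as [MP1 HMP1].
  assert (U : forall t i, phi1 t i <= phi0 t i).
  { intros t i.
    assert (H := maxpr (D i) c (beta i) (fun s => phi0 s i - phi1 s i) (fun s => q1 s i - r1 s i)
       (fun s => q2 s i - r2 s i) (MQ + B0) (MQ1 + B1) (HD i) (Hbeta i) Hc).
    cut (0 <= phi0 t i - phi1 t i). lra. apply H.
    - intros s. apply (der_minus (fun s => phi0 s i) (fun s => phi1 s i)); auto.
    - intros s. apply (cont_minus (fun s => q1 s i) (fun s => r1 s i)); auto. eapply der_cont; apply DG1.
    - intros s Hs. apply (der_minus (fun s => q1 s i) (fun s => r1 s i)); auto.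
    - intros s. apply abs_sub_le; auto.
    - intros s. apply abs_sub_le; auto.
    - intros s Hs. specialize (Wq s i Hs). specialize (ODE s i). unfold wave in Wq. unfold hh, Hop in ODE. lra. }
  assert (L : forall t i, phi t i <= phi1 t i).
  { intros t i.
    assert (H := maxpr (D i) c (beta i) (fun s => phi1 s i - phi s i) (fun s => r1 s i - p1 s i)
       (fun s => r2 s i - p2 s i) (B0 + MP) (B1 + MP1) (HD i) (Hbeta i) Hc).
    cut (0 <= phi1 t i - phi t i). lra. apply H.
    - intros s. apply (der_minus (fun s => phi1 s i) (fun s => phi s i)); auto.
    - intros s. apply (cont_minus (fun s => r1 s i) (fun s => p1 s i)); auto. eapply der_cont; apply DG1.
    - intros s Hs. apply (der_minus (fun s => r1 s i) (fun s => p1 s i)); auto.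
    - intros s. apply abs_sub_le; auto.
    - intros s. apply abs_sub_le; auto.
    - intros s Hs. specialize (Wp s i Hs). specialize (ODE s i). specialize (hle s i).
      unfold wave in Wp. unfold Hop in hle. lra. }
  assert (Mon : forall t s i, t <= s -> phi1 t i <= phi1 s i).
  { intros t s i Hts. set (a := s - t).
    assert (H := maxpr (D i) c (beta i) (fun x => phi1 (x + a) i - phi1 x i) (fun x => r1 (x + a) i - r1 x i)
       (fun x => r2 (x + a) i - r2 x i) (B0 + B0) (B1 + B1) (HD i) (Hbeta i) Hc).
    cut (0 <= phi1 (t + a) i - phi1 t i). { unfold a. replace (t + (s - t)) with s by ring. lra. }
    apply H.
    - intros x. apply (der_minus (fun x => phi1 (x + a) i) (fun s => phi1 s i)); auto.
      apply (der_shift (fun s => phi1 s i)); auto.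
    - intros x. apply (cont_minus (fun x => r1 (x + a) i) (fun s => r1 s i)).
      + eapply der_cont. apply (der_shift (fun s => r1 s i)); auto.
      + eapply der_cont; apply DG1.
    - intros x Hx. apply (der_minus (fun x => r1 (x + a) i) (fun s => r1 s i)); auto.
      apply (der_shift (fun s => r1 s i)); auto.
    - intros x. apply abs_sub_le; auto.
    - intros x. apply abs_sub_le; auto.
    - intros x Hx. pose proof (ODE (x + a) i). pose proof (ODE x i).
      pose proof (hm x (x + a) i ltac:(unfold a; lra)). lra. }
  assert (Gam1 : in_Gamma K phi1).
  { split; [|split; [|split]].
    - intros t i. eapply der_cont; apply DG0.
    - exact Mon.
    - intros i. apply (is_lim_le_le_loc (fun s => phi s i) (fun s => phi0 s i)).
      + exists 0. intros; split; auto.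
      + apply Gphi.
      + apply Gphi0.
    - intros i. apply (is_lim_le_le_loc (fun s => phi s i) (fun s => phi0 s i)).
      + exists 0. intros; split; auto.
      + apply Gphi.
      + apply Gphi0. }
  split; [exact Gam1| split].
  - exists r1, r2. split; [exact DG0| split; [exact DG1| split; [exact CG2| split]]].
    { exists B0; exact HB0. }
    split. { exists B1; exact HB1. }
    split. { exact Br2. }
    intros t i. unfold wave.
    destruct (lip_vec phi1 r1 DG0 (ex_intro _ B1 HB1)) as [L1 [HL1 Lip1]].
    assert (X := Hmono (shift phi0 t) (shift phi1 t) (Csh phi0 Lq HLq Lipq t) (Csh phi1 L1 HL1 Lip1 t)).
    refine (_ (X _ i)).
    + rewrite !shift0. intros Y. specialize (ODE t i). unfold hh, Hop in ODE. lra.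
    + intros th _. split; [|split]; intros j; unfold vzero, shift; simpl.
      * pose proof (Rp (t + th) j). pose proof (L (t + th) j). lra.
      * apply U.
      * apply Rq.
  - intros t i; split; auto.
Qed.
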